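(* Let $G$ be a graph on $n$ vertices with a Hamilton cycle $C$, let $k\ge 2$ divide $n$, let $s \ge n/k$, and let $\Pi$ be a noncanonical $(k,s)$-BCP of $G$, with spanning trees $T_i$, centers $c_i$ and heavy/light fragments fixed as in the context. If some light fragment of a large district is adjacent along $C$ (i.e., joined by an edge of $C$) to a vertex of a small district, then there is a single recombination move producing a $(k,s)$-BCP whose total number of fragments is strictly smaller than that of $\Pi$.
   Context: A $(k,s)$-BCP of a graph $G$ on $n$ vertices is a partition of $V(G)$ into $k$ nonempty sets (districts), each inducing a connected subgraph, with $\big||U|-n/k\big|\le s$ for every district $U$. A recombination move replaces two districts $V_i,V_j$ by two sets $W_i,W_j$ with $W_i\cup W_j=V_i\cup V_j$ such that the result is again a $(k,s)$-BCP (different from the original), leaving other districts unchanged. Given a Hamilton cycle $C$: the partition is canonical if every district consists of consecutive vertices along $C$. A fragment of a district $V_i$ is a maximal subset of $V_i$ of vertices contiguous along $C$; $f_i$ denotes the number of fragments of $V_i$, and the total number of fragments is $\sum_i f_i$. A district is small if $|V_i|\le n/k$ and large otherwise. An edge of $G$ not on $C$ is a chord. For each $i$, $T_i$ is a fixed spanning tree of $G[V_i]$ with the minimum number of chords (it consists of the $f_i$ paths along $C$ plus $f_i-1$ chords), and $c_i$ is a fixed center of $T_i$, i.e., a vertex such that every component of $T_i-c_i$ has at most $|V_i|/2$ vertices. The fragment of $V_i$ containing $c_i$ is heavy; the others are light. *)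

(* Defs.v *)
From HB Require Import structures.
From mathcomp Require Import all_boot all_order all_algebra all_fingroup.
Set Implicit Arguments. Unset Strict Implicit. Unset Printing Implicit Defensive.
Import Order.TTheory GRing.Theory Num.Theory.
Local Open Scope ring_scope.

(* Vertices: a finite type T, n = #|T|.  Graph: symmetric irreflexive e.
   Hamilton cycle C: a cyclic permutation sigma of T (one orbit) with
   e x (sigma x) for all x; its edges are {x, sigma x}. *)

Definition simple_graph (T : finType) (e : rel T) :=
  symmetric e /\ irreflexive e.

Definition hamilton_cycle (T : finType) (e : rel T) (sigma : {perm T}) :=
  [/\ (3 <= #|T|)%N, forall x, e x (sigma x) & forall x y, fconnect sigma x y].

Definition induced_connected (T : finType) (e : rel T) (U : {set T}) :=
  forall x y, x \in U -> y \in U ->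
    connect (fun a b => [&& a \in U, b \in U & e a b]) x y.

Definition contig (T : finType) (sigma : {perm T}) (A : {set T}) : bool :=
  [exists x, [exists j : 'I_#|T|.+1,
     (0 < j)%N && (A == [set y | [exists i : 'I_j, y == iter i sigma x]])]].

Definition fragment (T : finType) (sigma : {perm T}) (V A : {set T}) : bool :=
  maxset (fun B : {set T} => contig sigma B && (B \subset V)) A.

Definition nfrag (T : finType) (sigma : {perm T}) (V : {set T}) : nat :=
  #|[set A : {set T} | fragment sigma V A]|.

Definition total_frag (T : finType) (sigma : {perm T}) (P : {set {set T}}) : nat :=
  (\sum_(V in P) nfrag sigma V)%N.

Definition BCP (T : finType) (e : rel T) (k : nat) (s : rat)
    (P : {set {set T}}) :=
  [/\ partition P [set: T], #|P| = k &
      (forall U, U \in P ->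
        induced_connected e U /\
        `| (#|U|%:R : rat) - (#|T|%:R / k%:R) | <= s)].

Definition canonical_part (T : finType) (sigma : {perm T}) (P : {set {set T}}) :=
  forall V, V \in P -> contig sigma V.

Definition small_d (T : finType) (k : nat) (V : {set T}) :=
  (#|V|%:R : rat) <= #|T|%:R / k%:R.
Definition large_d (T : finType) (k : nat) (V : {set T}) :=
  #|T|%:R / k%:R < (#|V|%:R : rat).

Definition recombination (T : finType) (e : rel T) (k : nat) (s : rat)
    (P P' : {set {set T}}) :=
  exists V1 V2 W1 W2 : {set T},
    [/\ [&& V1 \in P, V2 \in P & V1 != V2],
        W1 :|: W2 = V1 :|: V2,
        P' = (P :\ V1 :\ V2) :|: [set W1; W2],
        BCP e k s P' & P' != P].

Definition is_edge (T : finType) (e : rel T) (f : {set T}) : bool :=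
  [exists x, [exists y, e x y && (f == [set x; y])]].

Definition C_edge (T : finType) (sigma : {perm T}) (f : {set T}) : bool :=
  [exists x, f == [set x; sigma x]].

Definition spanning_tree (T : finType) (e : rel T) (V : {set T})
    (F : {set {set T}}) :=
  [/\ (forall f, f \in F -> is_edge e f && (f \subset V)),
      (forall x y, x \in V -> y \in V ->
        connect (fun a b => [set a; b] \in F) x y)
    & #|F| = (#|V| - 1)%N].

Definition nchords (T : finType) (sigma : {perm T}) (F : {set {set T}}) :=
  #|[set f in F | ~~ C_edge sigma f]|.

Definition min_chord_tree (T : finType) (e : rel T) (sigma : {perm T})
    (V : {set T}) (F : {set {set T}}) :=
  spanning_tree e V F /\
  forall F', spanning_tree e V F' -> (nchords sigma F <= nchords sigma F')%N.

Definition tree_center (T : finType) (V : {set T}) (F : {set {set T}}) (c : T) :=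
  c \in V /\
  forall u, u \in V -> u != c ->
    (2 * #|[set v | connect (fun a b => [&& a != c, b != c & [set a; b] \in F]) u v]|
      <= #|V|)%N.

(* Main.v *)
Require Import Defs.
From mathcomp Require Import all_boot all_order all_algebra all_fingroup.
Import Order.TTheory GRing.Theory Num.Theory.
From mathcomp Require Import lra.

Set Implicit Arguments. Unset Strict Implicit. Unset Printing Implicit Defensive.

Definition cseg (T : finType) (sigma : {perm T}) (a : T) (j : nat) : {set T} :=
  [set y | [exists i : 'I_j, y == iter i sigma a]].

Lemma in_cseg (T : finType) (sigma : {perm T}) a j y :
  reflect (exists2 i, i < j & y = iter i sigma a) (y \in cseg sigma a j).
Proof.
rewrite inE; apply: (iffP existsP) => [[i /eqP ->]|[i lt ->]].
  by exists i.
by exists (Ordinal lt).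
Qed.

Definition onecyc (T : finType) (sigma : {perm T}) := forall x y : T, fconnect sigma x y.

Lemma order_all (T : finType) (sigma : {perm T}) x :
  onecyc sigma -> fingraph.order sigma x = #|T|.
Proof. by move=> hc; rewrite /fingraph.order; apply: eq_card => y; rewrite inE hc. Qed.

Lemma iter_inj (T : finType) (sigma : {perm T}) a i j :
  onecyc sigma -> i < #|T| -> j < #|T| -> iter i sigma a = iter j sigma a -> i = j.
Proof.
move=> hc hi hj e.
rewrite -(order_all a hc) in hi hj.
by rewrite -(findex_iter hi) e findex_iter.
Qed.

Lemma iter_all (T : finType) (sigma : {perm T}) a z :
  onecyc sigma -> exists2 i, i < #|T| & z = iter i sigma a.
Proof.
move=> hc; exists (fingraph.findex sigma a z).
  by rewrite -(order_all a hc); apply: findex_max.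
by rewrite iter_findex.
Qed.

Lemma iter_n (T : finType) (sigma : {perm T}) a :
  onecyc sigma -> iter #|T| sigma a = a.
Proof. by move=> hc; rewrite -(order_all a hc) (fingraph.iter_order (@perm_inj _ sigma)). Qed.

Lemma cseg_full (T : finType) (sigma : {perm T}) a :
  onecyc sigma -> cseg sigma a #|T| = setT.
Proof.
move=> hc; apply/setP => z; rewrite [in RHS]inE; apply/in_cseg.
by have [i hi ->] := iter_all a z hc; exists i.
Qed.

Lemma iterSV (T : finType) (sigma : {perm T}) a i :
  iter i.+1 sigma ((sigma^-1)%g a) = iter i sigma a.
Proof. by rewrite iterSr permKV. Qed.


Lemma contig_cseg (T : finType) (sigma : {perm T}) b m :
  0 < m -> m <= #|T| -> contig sigma (cseg sigma b m).
Proof.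
move=> m0 mT; apply/existsP; exists b; apply/existsP.
have mT' : m < #|T|.+1 by rewrite ltnS.
by exists (Ordinal mT'); rewrite /= m0 eqxx.
Qed.

Lemma contigP (T : finType) (sigma : {perm T}) A :
  contig sigma A -> exists a j, [/\ 0 < j, j <= #|T| & A = cseg sigma a j].
Proof.
case/existsP=> a /existsP [j /andP [j0 /eqP ->]].
by exists a, j; split=> //; rewrite -ltnS ltn_ord.
Qed.

Definition start (T : finType) (sigma : {perm T}) (W : {set T}) w :=
  (w \in W) && ((sigma^-1)%g w \notin W).

Definition lenr (T : finType) (sigma : {perm T}) (W : {set T}) w :=
  find (fun i => iter i sigma w \notin W) (iota 0 #|T|).

Lemma lenr_spec (T : finType) (sigma : {perm T}) (W : {set T}) w :
  onecyc sigma -> W != setT ->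
  [/\ lenr sigma W w < #|T|, iter (lenr sigma W w) sigma w \notin W &
      forall i, i < lenr sigma W w -> iter i sigma w \in W].
Proof.
move=> hc WT.
have [z zW] : exists z, z \notin W.
  case: (pickP (fun z => z \notin W)) => [z hz|h]; first by exists z.
  by case/eqP: WT; apply/setP => z; rewrite inE; move: (h z) => /= /negbFE.
have hh : has (fun i => iter i sigma w \notin W) (iota 0 #|T|).
  have [i hi ez] := iter_all w z hc.
  by apply/hasP; exists i; rewrite ?mem_iota //= -ez.
have lt : lenr sigma W w < #|T| by rewrite /lenr; move: hh; rewrite has_find size_iota.
split=> //.
  by have := nth_find 0 hh; rewrite nth_iota.
move=> i hi; have := before_find 0 hi; rewrite nth_iota ?add0n.
  by move/negbFE.
exact: ltn_trans lt.
Qed.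

Lemma lenr_eq (T : finType) (sigma : {perm T}) (W : {set T}) w j :
  onecyc sigma -> W != setT ->
  (forall i, i < j -> iter i sigma w \in W) -> iter j sigma w \notin W ->
  lenr sigma W w = j.
Proof.
move=> hc WT hin hout; have [lt hl hb] := lenr_spec w hc WT.
case: (ltngtP (lenr sigma W w) j) => // h.
  by move: (hin _ h); rewrite (negbTE hl).
by move: (hb _ h); rewrite (negbTE hout).
Qed.

Lemma iter_predV (T : finType) (sigma : {perm T}) a i :
  (sigma^-1)%g (iter i.+1 sigma a) = iter i sigma a.
Proof. by rewrite iterS permK. Qed.

Lemma setT_nsub (T : finType) (W : {set T}) : W != setT -> exists z, z \notin W.
Proof.
move=> WT; case: (pickP (fun z => z \notin W)) => [z hz|h]; first by exists z.
by case/eqP: WT; apply/setP => z; rewrite inE; move: (h z) => /= /negbFE.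
Qed.

Lemma frag_shape (T : finType) (sigma : {perm T}) (W A : {set T}) :
  onecyc sigma -> W != setT -> fragment sigma W A ->
  exists a, start sigma W a /\ A = cseg sigma a (lenr sigma W a).
Proof.
move=> hc WT hA; case/maxsetP: (hA) => /andP[cA sAW] maxA.
case: (contigP cA) => a [j [j0 jT eA]].
have inA i : i < j -> iter i sigma a \in A by move=> hi; rewrite eA; apply/in_cseg; exists i.
have inW i : i < j -> iter i sigma a \in W by move=> hi; apply: (subsetP sAW); apply: inA.
have jlt : j < #|T|.
  rewrite ltn_neqAle jT andbT; apply/negP => /eqP ej.
  case/eqP: WT; apply/eqP; rewrite eqEsubset subsetT /=.
  by rewrite -(cseg_full a hc) -ej -eA.
have out : iter j sigma a \notin W.
  apply/negP => hjW.
  have cB : contig sigma (cseg sigma a j.+1) by apply: contig_cseg.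
  have sB : cseg sigma a j.+1 \subset W.
    apply/subsetP => y /in_cseg [i]; rewrite ltnS leq_eqVlt => /orP [/eqP -> -> //|hi ->].
    exact: inW.
  have sAB : A \subset cseg sigma a j.+1.
    apply/subsetP => y; rewrite eA => /in_cseg [i hi ->]; apply/in_cseg; exists i => //.
    exact: ltnW.
  have eB := maxA _ (introT andP (conj cB sB)) sAB.
  have : iter j sigma a \in cseg sigma a j.+1 by apply/in_cseg; exists j.
  rewrite eB eA => /in_cseg [i hi ei].
  have := iter_inj hc jlt (ltn_trans hi jlt) ei.
  by move=> ej; rewrite ej ltnn in hi.
have st : (sigma^-1)%g a \notin W.
  apply/negP => hpW.
  have cB : contig sigma (cseg sigma ((sigma^-1)%g a) j.+1) by apply: contig_cseg.
  have sB : cseg sigma ((sigma^-1)%g a) j.+1 \subset W.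
    apply/subsetP => y /in_cseg [[|i] hi ->] //.
    by rewrite iterSV; apply: inW.
  have sAB : A \subset cseg sigma ((sigma^-1)%g a) j.+1.
    apply/subsetP => y; rewrite eA => /in_cseg [i hi ->]; apply/in_cseg; exists i.+1 => //.
    by rewrite iterSV.
  have eB := maxA _ (introT andP (conj cB sB)) sAB.
  have : (sigma^-1)%g a \in cseg sigma ((sigma^-1)%g a) j.+1 by apply/in_cseg; exists 0.
  rewrite eB eA => /in_cseg [i hi ei].
  have ea : iter 0 sigma a = iter i.+1 sigma a by rewrite iterS -ei permKV.
  have := iter_inj hc (leq_ltn_trans (leq0n _) jlt) (leq_ltn_trans hi jlt) ea.
  by [].
exists a; split.
  by rewrite /start st andbT; apply: (inW 0).
by rewrite eA (lenr_eq hc WT inW out).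
Qed.

Lemma lenr_pos (T : finType) (sigma : {perm T}) (W : {set T}) a :
  onecyc sigma -> W != setT -> start sigma W a -> 0 < lenr sigma W a.
Proof.
move=> hc WT /andP [aW _]; have [_ hout _] := lenr_spec a hc WT.
by rewrite lt0n; apply/negP => /eqP e; rewrite e /= aW in hout.
Qed.

Lemma frag_of_start (T : finType) (sigma : {perm T}) (W : {set T}) a :
  onecyc sigma -> W != setT -> start sigma W a ->
  fragment sigma W (cseg sigma a (lenr sigma W a)).
Proof.
move=> hc WT sa; have [lt hout hin] := lenr_spec a hc WT.
have j0 := lenr_pos hc WT sa.
move: sa => /andP [aW naW].
apply/maxsetP; split.
  rewrite contig_cseg ?(ltnW lt) //=.
  by apply/subsetP => y /in_cseg [i hi ->]; apply: hin.
move=> B /andP [cB sBW] sAB.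
case: (contigP cB) => b [m [m0 mT eB]]; subst B.
have : a \in cseg sigma b m by apply: (subsetP sAB); apply/in_cseg; exists 0.
move=> /in_cseg [[|i] hi ea].
  rewrite /= in ea; subst b.
  apply/eqP; rewrite eqEsubset sAB andbT; apply/subsetP => y.
  move=> /in_cseg [i hi2 ->]; apply/in_cseg; exists i => //.
  rewrite ltnNge; apply/negP => hle.
  have : iter (lenr sigma W a) sigma a \in cseg sigma a m.
    by apply/in_cseg; exists (lenr sigma W a) => //; apply: leq_ltn_trans hi2.
  by move/(subsetP sBW); rewrite (negbTE hout).
have : (sigma^-1)%g a \in cseg sigma b m by rewrite ea iter_predV; apply/in_cseg; exists i => //; apply: ltnW.
by move/(subsetP sBW); rewrite (negbTE naW).
Qed.

Lemma cseg_start_inj (T : finType) (sigma : {perm T}) (W : {set T}) a b :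
  onecyc sigma -> W != setT -> start sigma W a -> start sigma W b ->
  cseg sigma a (lenr sigma W a) = cseg sigma b (lenr sigma W b) -> a = b.
Proof.
move=> hc WT sa sb e.
have : b \in cseg sigma b (lenr sigma W b) by apply/in_cseg; exists 0 => //; apply: lenr_pos.
rewrite -e => /in_cseg [[|i] hi eb] //.
have [_ _ hin] := lenr_spec a hc WT.
move: sb => /andP [_]; rewrite eb iter_predV hin //.
exact: ltnW.
Qed.

Lemma nfrag_starts (T : finType) (sigma : {perm T}) (W : {set T}) :
  onecyc sigma -> W != setT ->
  nfrag sigma W = #|[set w | start sigma W w]|.
Proof.
move=> hc WT; rewrite /nfrag.
have -> : [set A | fragment sigma W A] =
          (fun a => cseg sigma a (lenr sigma W a)) @: [set w | start sigma W w].
  apply/setP => A; rewrite inE; apply/idP/imsetP.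
    by move=> /(frag_shape hc WT) [a [sa ->]]; exists a; rewrite ?inE.
  by move=> [a]; rewrite inE => sa ->; apply: frag_of_start.
apply: card_in_imset => a b; rewrite !inE => sa sb.
exact: cseg_start_inj.
Qed.

Lemma frag_facts (T : finType) (sigma : {perm T}) (W A : {set T}) :
  onecyc sigma -> W != setT -> fragment sigma W A ->
  exists a, [/\ A \subset W,
    (forall w, w \in A -> sigma w \in W -> sigma w \in A),
    (forall w, w \in A -> (sigma^-1)%g w \in W -> (sigma^-1)%g w \in A) &
    (forall w, w \in A ->
       connect (fun u u' => [&& u \in A, u' \in A & u' == sigma u]) a w)].
Proof.
move=> hc WT hA.
have sAW : A \subset W by case/maxsetP: hA => /andP [].
have [a [sa eA]] := frag_shape hc WT hA.
have [lt hout hin] := lenr_spec a hc WT.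
exists a; split => //.
- move=> w; rewrite eA => /in_cseg [i hi ->] hs; apply/in_cseg; exists i.+1; last by rewrite iterS.
  by rewrite ltn_neqAle hi andbT; apply/eqP => e; move: hout; rewrite -e iterS hs.
- move=> w; rewrite eA => /in_cseg [[|i] hi ->] hs.
    by move: sa => /andP [_]; rewrite /= hs.
  by rewrite iter_predV; apply/in_cseg; exists i => //; apply: ltnW.
move=> w; rewrite eA => /in_cseg [i hi ->].
elim: i hi => [|i IH] hi; first exact: connect0.
apply: connect_trans (IH (ltnW hi)) (connect1 _).
by rewrite iterS eqxx andbT; apply/andP; split; apply/in_cseg;
  [exists i => //; apply: ltnW | exists i.+1].
Qed.


Lemma same_block (T : finType) (P : {set {set T}}) W W' w :
  trivIset P -> W \in P -> W' \in P -> w \in W -> w \in W' -> W = W'.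
Proof.
move=> tP WP W'P wW wW'; apply/eqP; apply/negPn/negP => ne.
move/trivIsetP: tP => tP.
by have := disjointFr (tP _ _ WP W'P ne) wW; rewrite wW'.
Qed.

Definition cutw (T : finType) (sigma : {perm T}) (P : {set {set T}}) w :=
  ~~ [exists W in P, (w \in W) && ((sigma^-1)%g w \in W)].

Lemma card_sum_cond (T : finType) (W : {set T}) (p : pred T) :
  #|[set w in W | p w]| = (\sum_(w in W) (p w : nat))%N.
Proof.
rewrite -sum1_card (eq_bigl (fun w => (w \in W) && p w)); last by move=> w; rewrite inE.
by rewrite big_mkcondr /=; apply: eq_bigr => w _; case: (p w).
Qed.

Lemma total_cut (T : finType) (sigma : {perm T}) (P : {set {set T}}) :
  onecyc sigma -> partition P setT -> (forall W, W \in P -> W != setT) ->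
  total_frag sigma P = #|[set w | cutw sigma P w]|.
Proof.
move=> hc pP PT; have tP : trivIset P by case/and3P: pP.
rewrite /total_frag.
have -> : #|[set w | cutw sigma P w]| = #|[set w in cover P | cutw sigma P w]|.
  by rewrite (cover_partition pP); apply: eq_card => w; rewrite !inE.
rewrite card_sum_cond big_trivIset //.
apply: eq_bigr => W WP; rewrite nfrag_starts ?PT //.
rewrite (_ : [set w | start sigma W w] = [set w in W | (sigma^-1)%g w \notin W]);
  last by apply/setP => w; rewrite !inE.
rewrite card_sum_cond; apply: eq_bigr => w wW; congr nat_of_bool.
rewrite /cutw; apply/idP/idP.
  move=> h; apply/negP => /existsP [W' /and3P [W'P wW' pW']].
  by rewrite (same_block tP WP W'P wW wW') pW' in h.
move=> h; apply/negP => pW; case/negP: h; apply/existsP; exists W.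
by rewrite WP wW pW.
Qed.


Lemma connect_symm (T : finType) (E : rel T) x y :
  symmetric E -> connect E x y -> connect E y x.
Proof. by move=> sE; rewrite (sym_connect_sym sE). Qed.

Lemma connect_mono (T : finType) (E E' : rel T) x y :
  (forall a b, E a b -> E' a b) -> connect E x y -> connect E' x y.
Proof. by move=> h; apply: connect_sub => a b /h; apply: connect1. Qed.

Lemma connect_inv (T : finType) (E : rel T) (K : pred T) x y :
  (forall a b, K a -> E a b -> K b) -> K x -> connect E x y -> K y.
Proof.
move=> cl Kx /connectP [p pp ->]; elim: p x Kx pp => //= a p IH x Kx /andP [xa pa].
exact: IH (cl _ _ Kx xa) pa.
Qed.

Lemma connect_leave (T : finType) (E : rel T) (K : pred T) x y :
  connect E x y -> K x -> ~~ K y -> exists a b, [/\ E a b, K a & ~~ K b].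
Proof.
move=> cxy Kx nKy.
case: (boolP [exists a, exists b, [&& E a b, K a & ~~ K b]]).
  by case/existsP => a /existsP [b /and3P [? ? ?]]; exists a, b.
move=> hn; case/negP: nKy; apply: (connect_inv (K := K)) cxy => // a b Ka Eab.
apply/negPn/negP => nKb; case/negP: hn; apply/existsP; exists a; apply/existsP; exists b.
by rewrite Eab Ka nKb.
Qed.

Definition erel (T : finType) (F : {set {set T}}) : rel T := fun a b => [set a; b] \in F.

Lemma erel_sym (T : finType) (F : {set {set T}}) : symmetric (erel F).
Proof. by move=> a b; rewrite /erel setUC. Qed.

Lemma set2_eq (T : finType) (u w x y : T) :
  [set u; w] = [set x; y] -> (u = x /\ w = y) \/ (u = y /\ w = x).
Proof.
move=> e.
have hu : u \in [set x; y] by rewrite -e set21.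
have hw : w \in [set x; y] by rewrite -e set22.
have hx : x \in [set u; w] by rewrite e set21.
have hy : y \in [set u; w] by rewrite e set22.
move: hu hw hx hy; rewrite !inE.
by do 4 (case/orP => /eqP ?); subst; auto.
Qed.


Lemma no_conn_C (T : finType) (sigma : {perm T}) (H : {set {set T}}) (V : {set T}) v :
  onecyc sigma -> v \in V -> sigma v \in V -> V != setT ->
  (forall f, f \in H -> [&& C_edge sigma f, f \subset V & f != [set v; sigma v]]) ->
  ~~ connect (erel H) v (sigma v).
Proof.
move=> hc vV svV VT hH.
pose b0 := sigma v.
pose pos u := fingraph.findex sigma b0 u.
have hpos u : pos u < #|T| by rewrite -(order_all b0 hc); apply: findex_max.
have hiter u : iter (pos u) sigma b0 = u by apply: iter_findex.
have hposi i : i < #|T| -> pos (iter i sigma b0) = i.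
  by move=> hi; apply: findex_iter; rewrite order_all.
have n0 : 0 < #|T| by apply/card_gt0P; exists v.
have posv : pos v = #|T|.-1.
  have e : iter #|T|.-1 sigma b0 = v by rewrite /b0 -iterSr prednK // iter_n.
  by rewrite -{1}e hposi // prednK.
have posS a : a != v -> pos (sigma a) = (pos a).+1.
  move=> av.
  have h1 : pos a != #|T|.-1.
    by apply: contra av => /eqP e; rewrite -(hiter a) e -posv hiter.
  have h2 : (pos a).+1 < #|T|.
    by rewrite -(prednK n0) ltnS ltn_neqAle h1 -ltnS prednK // hpos.
  by rewrite -{1}(hiter a) -iterS hposi.
have [z zV] := setT_nsub VT.
pose p := pos z.
have zv : z != v by apply: contraNneq zV => ->.
have K_cl : forall a b, p < pos a -> erel H a b -> p < pos b.
  move=> a b Ka hab; have /and3P [cf sf nf] := hH _ hab.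
  have bV : b \in V by apply: (subsetP sf); rewrite set22.
  have bz : b != z by apply: contraNneq zV => <-.
  case/existsP: cf => x /eqP ef.
  case: (set2_eq ef) => [[ax bx] | [ax bx]].
    have av : a != v.
      by apply: contra nf => /eqP av; rewrite ef -ax av.
    by rewrite bx -ax posS // ltnS ltnW.
  have bv : b != v.
    by apply: contra nf => /eqP bv; rewrite ef -bx bv setUC.
  have e : pos a = (pos b).+1 by rewrite ax posS // -bx.
  rewrite e ltnS in Ka; rewrite ltn_neqAle Ka andbT.
  by apply: contra bz => /eqP ebp; rewrite -(hiter b) -ebp hiter.
apply/negP => hconn.
have Kv : p < pos v.
  rewrite posv ltn_neqAle -ltnS prednK // hpos andbT.
  by apply: contra zv => /eqP e; rewrite -(hiter z) -/p e -posv hiter.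
have := connect_inv (K := fun u => p < pos u) K_cl Kv hconn.
by rewrite /= -/b0 (_ : b0 = iter 0 sigma b0) // hposi.
Qed.

Definition chords (T : finType) (sigma : {perm T}) (H : {set {set T}}) :=
  [set f in H | ~~ C_edge sigma f].

Lemma find_break (T : finType) (sigma : {perm T}) (F : {set {set T}}) (V : {set T}) v :
  onecyc sigma -> v \in V -> sigma v \in V -> V != setT ->
  (forall f, f \in F -> f \subset V) -> [set v; sigma v] \notin F ->
  forall m (H : {set {set T}}), #|chords sigma H| <= m -> H \subset F ->
  connect (erel H) v (sigma v) ->
  exists (H0 : {set {set T}}) (h : {set T}), [/\ H0 \subset F, h \in H0, ~~ C_edge sigma h,
                   connect (erel H0) v (sigma v) & ~~ connect (erel (H0 :\ h)) v (sigma v)].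
Proof.
move=> hc vV svV VT hFV gF m; elim: m => [|m IH] H hm sHF hconn;
  (case: (pickP [pred f | (f \in H) && ~~ C_edge sigma f]) => [h /andP [hH hC] | none];
  last first).
- exfalso; apply: (negP (no_conn_C (H := H) hc vV svV VT _)) hconn => f fH.
  have := none f; rewrite /= fH /= => /negbFE ->; rewrite hFV ?(subsetP sHF) //=.
  by apply: contraNneq gF => <-; apply: (subsetP sHF).
- case: (boolP (connect (erel (H :\ h)) v (sigma v))) => hc2; last by exists H, h.
  by move: hm; rewrite leqn0 => /eqP/cards0_eq e; move: (in_set0 h); rewrite -e inE hH hC.
- exfalso; apply: (negP (no_conn_C (H := H) hc vV svV VT _)) hconn => f fH.
  have := none f; rewrite /= fH /= => /negbFE ->; rewrite hFV ?(subsetP sHF) //=.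
  by apply: contraNneq gF => <-; apply: (subsetP sHF).
case: (boolP (connect (erel (H :\ h)) v (sigma v))) => hc2; last by exists H, h.
apply: (IH (H :\ h)) => //; last by apply: subset_trans sHF; apply: subD1set.
rewrite -ltnS; apply: leq_trans hm; apply: proper_card; apply/properP; split.
  by apply/subsetP => f; rewrite !inE => /andP [/andP [_ ->] ->].
by exists h; rewrite !inE ?hH ?hC ?eqxx.
Qed.

Lemma split_h (T : finType) (H0 : {set {set T}}) h v w :
  h \in H0 -> connect (erel H0) v w -> ~~ connect (erel (H0 :\ h)) v w ->
  exists p q, [/\ h = [set p; q], connect (erel (H0 :\ h)) v p &
                  connect (erel (H0 :\ h)) w q].
Proof.
move=> hH cvw ncvw.
pose E := erel (H0 :\ h).
have sE : symmetric E by apply: erel_sym.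
have [p [q [epq Kp nKq]]] := connect_leave (K := connect E v) cvw (connect0 _ _) ncvw.
have hpq : [set p; q] = h.
  apply/eqP; apply/negPn/negP => ne; case/negP: nKq.
  by apply: connect_trans Kp (connect1 _); rewrite /E /erel !inE ne.
have ncwv : ~~ connect E w v by apply: contra ncvw => /(connect_symm sE).
have cwv : connect (erel H0) w v by apply: connect_symm => //; apply: erel_sym.
have [p' [q' [epq' Kp' nKq']]] := connect_leave (K := connect E w) cwv (connect0 _ _) ncwv.
have hpq' : [set p'; q'] = h.
  apply/eqP; apply/negPn/negP => ne; case/negP: nKq'.
  by apply: connect_trans Kp' (connect1 _); rewrite /E /erel !inE ne.
rewrite -hpq' in hpq; case: (set2_eq hpq) => [[e1 e2]|[e1 e2]].
  case/negP: ncvw; apply: connect_trans Kp _; rewrite e1; apply: connect_symm => //.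
by exists p, q; split; [rewrite -hpq' -hpq | | rewrite e2].
Qed.

Lemma min_chord_C (T : finType) (e : rel T) (sigma : {perm T}) (V : {set T})
    (F : {set {set T}}) v :
  hamilton_cycle e sigma -> min_chord_tree e sigma V F -> V != setT ->
  v \in V -> sigma v \in V -> [set v; sigma v] \in F.
Proof.
move=> [_ he hc] [[hedge hconnF hcard] hmin] VT vV svV.
apply/negPn/negP => gF.
have hFV f : f \in F -> f \subset V by move=> /hedge /andP [].
have [H0 [h [sH0F hH0 hC cH0 ncH0]]] :=
  find_break hc vV svV VT hFV gF (leqnn _) (subxx F) (hconnF _ _ vV svV).
have [p [q [ehpq cvp cwq]]] := split_h hH0 cH0 ncH0.
have hF : h \in F by apply: (subsetP sH0F).
pose g := [set v; sigma v].
pose F' := (F :\ h) :|: [set g].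
have sub1 a b : erel (H0 :\ h) a b -> erel F' a b.
  rewrite /erel !inE => /andP [-> /(subsetP sH0F) ->]; by [].
have gF' : erel F' v (sigma v) by rewrite /erel !inE eqxx orbT.
have cpq : connect (erel F') p q.
  apply: connect_trans (connect_mono sub1 (connect_symm (@erel_sym _ _) cvp)) _.
  apply: connect_trans (connect1 gF') _.
  exact: connect_mono sub1 cwq.
have sT' : spanning_tree e V F'.
  split.
  - move=> f; rewrite !inE => /orP [/andP [_ /hedge] //| /eqP ->].
    rewrite /is_edge; apply/andP; split.
      by apply/existsP; exists v; apply/existsP; exists (sigma v); rewrite he eqxx.
    by apply/subsetP => y /set2P [] ->.
  - move=> x y xV yV; apply: connect_sub (hconnF _ _ xV yV) => a b eab.
    case: (eqVneq [set a; b] h) => eh.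
      rewrite ehpq in eh; case: (set2_eq eh) => [[-> ->] //|[-> ->]].
      exact: connect_symm (@erel_sym _ _) cpq.
    by apply: connect1; rewrite /erel !inE eh eab.
    rewrite /F' setUC cardsU1 (cardsD1 h F) hF in hcard *.
    have -> : g \notin F :\ h by rewrite inE negb_and gF orbT.
    by rewrite add1n -hcard.
have := hmin _ sT'; apply/negP; rewrite -ltnNge.
rewrite /nchords (cardsD1 h [set f in F | ~~ C_edge sigma f]) inE hF hC /=.
rewrite add1n ltnS subset_leq_card //; apply/subsetP => f; rewrite !inE.
case/andP => /orP [/andP [-> ->] -> //| /eqP ->].
by rewrite /C_edge; case/negP; apply/existsP; exists v.
Qed.


Lemma connect_restrict (T : finType) (E : rel T) x y :
  connect E x y -> connect (fun a b => [&& connect E x a, connect E x b & E a b]) x y.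
Proof.
move=> h; apply: (connect_inv (K := fun y => connect (fun a b => [&& connect E x a, connect E x b & E a b]) x y)) _ (connect0 _ x) h.
move=> a b Ka Eab.
have cxa : connect E x a by apply: connect_mono Ka => ? ? /and3P [].
apply: connect_trans Ka (connect1 _).
by rewrite cxa Eab (connect_trans cxa (connect1 Eab)).
Qed.

Lemma blockT (T : finType) (P : {set {set T}}) W :
  partition P setT -> 1 < #|P| -> W \in P -> W != setT.
Proof.
move=> pP hP WP; case/and3P: pP => _ tP s0.
have [W' [W'P ne]] : exists W', W' \in P /\ W' != W.
  case/card_gt1P: hP => A [B [AP BP AB]].
  case: (eqVneq A W) => e; last by exists A.
  by exists B; split => //; rewrite -e eq_sym.
have [w wW'] : exists w, w \in W'.
  by apply/set0Pn; apply: contraNneq s0 => <-.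
apply/negP => /eqP eW.
have wW : w \in W by rewrite eW inE.
have := same_block tP W'P WP wW' wW. by move=> e; rewrite e eqxx in ne.
Qed.

Lemma size_R (r v m s : rat) :
  (0 <= r)%R -> (r <= v)%R -> (`|v - m| <= s)%R -> (m <= s)%R -> (`|r - m| <= s)%R.
Proof. move=> h0 h1; rewrite !ler_norml => /andP [a b] c; apply/andP; split; lra. Qed.

Lemma size_W (u s2 v m s : rat) :
  (0 <= u)%R -> (0 <= s2)%R -> (2 * s2 <= v)%R -> (u <= m)%R ->
  (`|v - m| <= s)%R -> (m <= s)%R -> (`|u + s2 - m| <= s)%R.
Proof. move=> h0 h1 h2 h3; rewrite !ler_norml => /andP [a b] c; apply/andP; split; lra. Qed.

Unset Implicit Arguments.
Theorem mainTheorem5 (T : finType) (e : rel T) (sigma : {perm T})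
    (k : nat) (s : rat) (P : {set {set T}})
    (Tr : {set T} -> {set {set T}}) (cen : {set T} -> T) :
  simple_graph e ->
  hamilton_cycle e sigma ->
  2 <= k -> (k %| #|T|)%N ->
  (#|T|%:R / k%:R <= s)%R ->
  BCP e k s P ->
  ~ canonical_part sigma P ->
  (forall V, V \in P -> min_chord_tree e sigma V (Tr V) /\ tree_center V (Tr V) (cen V)) ->
  (exists V A x U y,
     [/\ V \in P /\ large_d k V,
         [&& fragment sigma V A, cen V \notin A & x \in A],
         U \in P /\ small_d k U,
         y \in U & (y == sigma x) || (x == sigma y)]) ->
  exists P', recombination e k s P P' /\ (total_frag sigma P' < total_frag sigma P)%N.
Proof.
move=> [esym eirr] hHam k2 kdiv hs [pP Pk hdist] _ htrees
  [V [A [x [U [y [[VP Vl] /and3P [fA cA xA] [UP Us] yU hxy]]]]]].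
have [h3 he hc] := hHam.
have tP : trivIset P by case/and3P: pP.
have P2 : 1 < #|P| by rewrite Pk.
have VT := blockT pP P2 VP.
have UT := blockT pP P2 UP.
have UV : U != V.
  by apply: contraTneq Us => ->; rewrite /small_d -ltNge; exact: Vl.
have UVd w : w \in U -> w \in V -> False.
  by move=> wU wV; have := same_block tP UP VP wU wV; move=> ee; rewrite ee eqxx in UV.
have [mct [cV hcen]] := htrees V VP.
have [[hedge hconnF hcard] _] := mct.
have hC u : u \in V -> sigma u \in V -> erel (Tr V) u (sigma u).
  by move=> a b; apply: (min_chord_C hHam mct VT a b).
have Fedge a b : erel (Tr V) a b -> [/\ a \in V, b \in V & e a b].
  move=> hab; case/andP: (hedge _ hab) => /existsP [x1 /existsP [y1 /andP [exy /eqP eab]]] sab.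
  split; [exact: (subsetP sab) a (set21 a b) | exact: (subsetP sab) _ (set22 a b)|].
  by case: (set2_eq eab) => [[-> ->]//|[-> ->]]; rewrite esym.
have [a0 [sAV cl1 cl2 Achain]] := frag_facts hc VT fA.
pose ER := fun a b => [&& a \notin A, b \notin A & erel (Tr V) a b].
pose R := [set r | connect ER (cen V) r].
pose S := V :\: R.
have cR : cen V \in R by rewrite inE connect0.
have RV : R \subset V.
  apply/subsetP => r; rewrite inE; apply: (connect_inv (K := fun r => r \in V)) => //.
  by move=> a b _ /and3P [_ _ /Fedge []].
have RA r : r \in R -> r \notin A.
  rewrite inE; apply: (connect_inv (K := fun r => r \notin A)) => //.
  by move=> a b _ /and3P [].
have inS w : (w \in S) = (w \in V) && (w \notin R) by rewrite inE andbC.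
have AS : A \subset S.
  apply/subsetP => w wA; rewrite inS (subsetP sAV) //=.
  by apply/negP => /RA; rewrite wA.
have xS : x \in S by apply: (subsetP AS).
have cS : cen V \notin S by rewrite inS cR andbF.
pose ES := fun a b => [&& a \in S, b \in S & erel (Tr V) a b].
have ESsym : symmetric ES.
  by move=> a b; rewrite /ES erel_sym; do 2 case: (_ \in S).
have prefix v : v \in S -> exists2 a, a \in A & connect ES v a.
  move=> vS; have vV : v \in V by move: vS; rewrite inS => /andP [].
  have /connectP [p pp lp] := hconnF v (cen V) vV cV.
  elim: p v vS {vV} pp lp => [|v1 p IH] v vS /=.
    by move=> _ ev; rewrite -ev in vS; rewrite vS in cS.
  case/andP => ev1 pp lp.
  case: (boolP (v \in A)) => vA; first by exists v => //; exact: connect0.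
  have [_ v1V _] := Fedge _ _ ev1.
  case: (boolP (v1 \in A)) => v1A.
    by exists v1 => //; apply: connect1; rewrite /ES vS (subsetP AS) // ev1.
  have v1S : v1 \in S.
    rewrite inS v1V /=; apply/negP => v1R; move: vS; rewrite inS => /andP [_ /negP]; apply.
    rewrite inE; apply: connect_trans (_ : connect ER (cen V) v1) (connect1 _).
      by rewrite inE in v1R.
    by rewrite /ER v1A vA erel_sym.
  have [a aA ca] := IH v1 v1S pp lp.
  by exists a => //; apply: connect_trans ca; apply: connect1; rewrite /ES vS v1S.
have chainS w : w \in A -> connect ES a0 w.
  move=> wA; apply: connect_mono (Achain w wA) => u u' /and3P [uA u'A /eqP eu].
  rewrite /ES !(subsetP AS) // eu hC // (subsetP sAV) //.
  by rewrite -eu.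
have SconnX v : v \in S -> connect ES v x.
  move=> vS; have [a aA ca] := prefix v vS.
  apply: connect_trans ca _.
  exact: connect_trans (connect_symm ESsym (chainS a aA)) (chainS x xA).
have Ssize : (2 * #|S| <= #|V|)%N.
  have xc : x != cen V by apply: contraNneq cA => <-.
  apply: leq_trans (hcen x (subsetP sAV x xA) xc); rewrite leq_mul2l /=.
  apply: subset_leq_card; apply/subsetP => v vS; rewrite inE.
  apply: connect_mono (connect_symm ESsym (SconnX v vS)).
  move=> a b /and3P [aS bS eab].
  by apply/and3P; split => //; apply: contraNneq cS => <-.
have nSR1 w : w \in S -> sigma w \in R -> False.
  move=> wS swR; have wV : w \in V by move: wS; rewrite inS => /andP [].
  have swV := subsetP RV _ swR.
  case: (boolP (w \in A)) => wA.
    by move: (RA _ swR); rewrite cl1.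
  move: wS; rewrite inS => /andP [_ /negP]; apply; rewrite inE.
  apply: connect_trans (_ : connect ER (cen V) (sigma w)) (connect1 _).
    by rewrite inE in swR.
  by rewrite /ER wA (RA _ swR) erel_sym hC.
have nSR2 w : w \in R -> sigma w \in S -> False.
  move=> wR swS; have wV := subsetP RV _ wR.
  have swV : sigma w \in V by move: swS; rewrite inS => /andP [].
  case: (boolP (sigma w \in A)) => swA.
    have := cl2 _ swA; rewrite permK => /(_ wV) wA.
    by move: (RA _ wR); rewrite wA.
  move: swS; rewrite inS => /andP [_ /negP]; apply; rewrite inE.
  apply: connect_trans (_ : connect ER (cen V) w) (connect1 _).
    by rewrite inE in wR.
  by rewrite /ER swA (RA _ wR) hC.
pose W2 := U :|: S.
pose P' := (P :\ V :\ U) :|: [set R; W2].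
have cU : cen V \notin U by apply/negP => cU; apply: (UVd _ cU cV).
have cW2 : cen V \notin W2 by rewrite inE negb_or cU cS.
have RW2 : R != W2 by apply: contraNneq cW2 => <-.
have yW2 : y \in W2 by rewrite inE yU.
have xW2 : x \in W2 by rewrite inE xS orbT.
have covP : cover P = setT by case/and3P: pP => /eqP.
have s0P : set0 \notin P by case/and3P: pP.
have W2P' : W2 \in P' by rewrite /P' !inE eqxx !orbT.
have RP' : R \in P' by rewrite /P' !inE eqxx !orbT.
pose blk w := if w \in V then (if w \in S then W2 else R)
              else if w \in U then W2 else pblock P w.
have blkP w : blk w \in P' /\ w \in blk w.
  rewrite /blk; case: (boolP (w \in V)) => wV.
    case: (boolP (w \in S)) => wS; first by split; [exact: W2P' | rewrite inE wS orbT].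
    by split; [exact: RP' | move: wS; rewrite inS wV /= => /negbNE].
  case: (boolP (w \in U)) => wU; first by split; [exact: W2P' | rewrite inE wU].
  have wc : w \in cover P by rewrite covP inE.
  have hb := pblock_mem wc; have wb : w \in pblock P w by rewrite mem_pblock.
  rewrite !inE hb andbT; split => //; apply/orP; left; apply/andP; split.
    by apply: contraNneq wU => <-.
  by apply: contraNneq wV => <-.
have blkU B w : B \in P' -> w \in B -> B = blk w.
  rewrite !inE => /orP [/andP [BU /andP [BV BP]] | /orP [/eqP -> | /eqP ->]] wB.
  - have wV : w \notin V.
      apply/negP => wV; case/negP: BV; apply/eqP; exact: (same_block tP BP VP wB wV).
    have wU : w \notin U.
      apply/negP => wU; case/negP: BU; apply/eqP; exact: (same_block tP BP UP wB wU).
    by rewrite /blk (negbTE wV) (negbTE wU) (def_pblock tP BP wB).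
  - by rewrite /blk (subsetP RV _ wB) inS (subsetP RV _ wB) wB.
  - rewrite /blk; move: wB; rewrite inE => /orP [wU|wS].
      have wV : w \notin V by apply/negP => wV; apply: (UVd _ wU wV).
      by rewrite (negbTE wV) wU.
    have wV : w \in V by move: (wS); rewrite inS => /andP []. 
    by rewrite wV wS.
have pP' : partition P' setT.
  apply/and3P; split.
  - apply/eqP/setP => w; rewrite inE; apply/bigcupP.
    by have [h1 h2] := blkP w; exists (blk w).
  - apply/trivIsetP => B1 B2 h1 h2 ne; rewrite disjoint_subset; apply/subsetP => w w1.
    rewrite inE; apply/negP => w2; case/negP: ne; apply/eqP.
    by rewrite (blkU _ _ h1 w1) (blkU _ _ h2 w2).
  - rewrite /P' !inE negb_or (negbTE s0P) !andbF /= negb_or.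
    apply/andP; split.
      by apply: contraTneq cR => <-; rewrite inE.
    by apply: contraTneq yW2 => <-; rewrite inE.
have RnP : R \notin P :\ V :\ U.
  rewrite !inE; apply/negP => /and3P [_ RV' RP].
  by case/negP: RV'; apply/eqP; exact: (same_block tP RP VP cR cV).
have W2nP : W2 \notin P :\ V :\ U.
  rewrite !inE; apply/negP => /and3P [W2U _ W2P].
  by case/negP: W2U; apply/eqP; exact: (same_block tP W2P UP yW2 yU).
have cardP' : #|P'| = k.
  rewrite /P' setUC -setUA cardsU1 cardsU1 in_setU1 negb_or RW2 RnP W2nP /=.
  rewrite -Pk (cardsD1 V P) (cardsD1 U (P :\ V)) VP !inE UV UP /=.
  by [].
have [_ hVs] := hdist V VP.
have [hUc _] := hdist U UP.
have hRs : (`|(#|R|%:R : rat) - #|T|%:R / k%:R| <= s)%R.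
  apply: (size_R (v := #|V|%:R)) => //.
  by rewrite ler_nat subset_leq_card.
have cW2e : #|W2| = (#|U| + #|S|)%N.
  rewrite cardsU (_ : U :&: S = set0) ?cards0 ?subn0 //.
  apply/setP => w; rewrite inE in_set0; apply/negP => /andP [wU wS].
  have wV : w \in V by move: wS; rewrite inS => /andP [].
  exact: UVd w wU wV.
have hW2s : (`|(#|W2|%:R : rat) - #|T|%:R / k%:R| <= s)%R.
  rewrite cW2e natrD; apply: (size_W (v := #|V|%:R)) => //; try by apply: ler0n.
  by rewrite -natrM ler_nat.
have hRc : induced_connected e R.
  move=> r1 r2 r1R r2R.
  pose GR := fun a b => [&& a \in R, b \in R & e a b].
  have GRsym : symmetric GR by move=> a b; rewrite /GR esym; do 2 case: (_ \in R).
  have toC r : r \in R -> connect GR (cen V) r.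
    move=> rR; have rR' := rR; rewrite inE in rR'.
    apply: connect_mono (connect_restrict rR') => a b /and3P [ca cb /and3P [_ _ eab]].
    by rewrite /GR !inE ca cb; case: (Fedge _ _ eab).
  exact: connect_trans (connect_symm GRsym (toC r1 r1R)) (toC r2 r2R).
have hW2c : induced_connected e W2.
  move=> w1 w2 w1W w2W.
  pose GW := fun a b => [&& a \in W2, b \in W2 & e a b].
  have GWsym : symmetric GW by move=> a b; rewrite /GW esym; do 2 case: (_ \in W2).
  have toX w : w \in W2 -> connect GW w x.
    rewrite inE => /orP [wU | wS].
      apply: connect_trans (connect_mono _ (hUc w y wU yU)) (connect1 _).
        by move=> a b /and3P [aU bU eab]; rewrite /GW !inE aU bU eab.
      rewrite /GW yW2 xW2 /=.
      by case/orP: hxy => /eqP ->; [rewrite esym he | rewrite he].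
    apply: connect_mono (SconnX w wS) => a b /and3P [aS bS eab].
    by rewrite /GW !in_setU aS bS !orbT; case: (Fedge _ _ eab).
  exact: connect_trans (toX w1 w1W) (connect_symm GWsym (toX w2 w2W)).
have bP' : BCP e k s P'.
  split => // B; rewrite /P' !inE => /orP [/andP [_ /andP [_ BP]] | /orP [/eqP -> | /eqP ->]].
  - exact: hdist.
  - by split.
  - by split.
have P'T W : W \in P' -> W != setT by apply: blockT pP' _; rewrite cardP'.
have ltc : #|[set w | cutw sigma P' w]| < #|[set w | cutw sigma P w]|.
  apply: proper_card; apply/properP; split.
    apply/subsetP => w; rewrite !inE /cutw; apply: contra => /existsP [B /and3P [BP wB pwB]].
    apply/existsP.
    have eww : sigma ((sigma^-1)%g w) = w by rewrite permKV.
    case: (eqVneq B V) => eBV.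
      rewrite eBV in wB pwB.
      case: (boolP (w \in S)) => wS.
        have pS : (sigma^-1)%g w \in S.
          rewrite inS pwB /=; apply/negP => pR; apply: (nSR2 _ pR); rewrite eww //.
        by exists W2; rewrite W2P' !in_setU wS pS !orbT.
      have wR : w \in R by move: wS; rewrite inS wB /= => /negbNE.
      have pR : (sigma^-1)%g w \in R.
        apply/negPn/negP => npR; have pS : (sigma^-1)%g w \in S by rewrite inS pwB npR.
        by apply: (nSR1 _ pS); rewrite eww.
      by exists R; rewrite RP' wR pR.
    case: (eqVneq B U) => eBU.
      by exists W2; rewrite W2P' !in_setU -eBU wB pwB.
    by exists B; rewrite /P' !inE eBV eBU BP wB pwB.
  have [w [wW pwW hw]] : exists w, [/\ w \in W2, (sigma^-1)%g w \in W2 &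
      ((w \in U) && ((sigma^-1)%g w \in V)) || ((w \in V) && ((sigma^-1)%g w \in U))].
    case/orP: hxy => /eqP ey.
      exists y; rewrite ey permK -ey yW2 xW2 yU (subsetP sAV x xA); by [].
    exists x; rewrite ey permK -ey yW2 xW2 yU (subsetP sAV x xA) orbT; by [].
  exists w.
    rewrite inE /cutw; apply/negP => /existsP [B /and3P [BP wB pwB]].
    case/orP: hw => /andP [h1 h2].
      have eB := same_block tP BP UP wB h1; rewrite eB in pwB; exact: (UVd _ pwB h2).
    have eB := same_block tP BP UP pwB h2; rewrite eB in wB; exact: (UVd _ wB h1).
  rewrite inE /cutw negbK; apply/existsP; exists W2; rewrite W2P' wW pwW; by [].
exists P'; split; last first.
  rewrite (total_cut hc pP') // (total_cut hc pP) //.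
  by move=> W; apply: blockT pP P2.
exists V, U, R, W2; split => //.
- by rewrite VP UP eq_sym UV.
- apply/setP => w; rewrite /W2 !in_setU inS.
  case: (boolP (w \in R)) => wR /=; first by rewrite (subsetP RV _ wR).
  by rewrite andbT orbC.
apply/eqP => eP; by move: ltc; rewrite eP ltnn.
Qed.
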